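(* Let $f$ be a homeomorphism of a compact, connected, separable metric space $\mathcal M$, and assume that $\mathcal M$ itself is not a chain-transitive set for $f$. Let $C$ be a reversible core of $f$. Then there exist an infinite sequence of pairwise distinct dissipative attractors $A_1,A_2,\dots$ of $f$ and an infinite sequence of pairwise distinct dissipative repellers $R_1,R_2,\dots$ of $f$ which accumulate on $C$: there are $\delta_k\to 0$ such that $A_k$ and $R_k$ lie in the $\delta_k$-neighbourhood of $C$ for every $k$ (so all limit points of these sequences lie in $C$).
   Context: An $\varepsilon$-orbit of $f$ is a finite sequence $x_1,\dots,x_N$ with $\mathrm{dist}(f(x_j),x_{j+1})<\varepsilon$ for $j=1,\dots,N-1$; it connects $x_1$ to $x_N$. A closed invariant set $\Lambda$ is chain-transitive if for every $\varepsilon>0$ and all $x,y\in\Lambda$ there is an $\varepsilon$-orbit lying in $\Lambda$ connecting $x$ to $y$. A closed invariant set $A$ is stable if for every $\delta>0$ there is $\varepsilon>0$ such that no $\varepsilon$-orbit starting in $A$ leaves the $\delta$-neighbourhood of $A$. A CRH-attractor (Conley–Ruelle–Hurley attractor) of $f$ is a closed invariant set that is chain-transitive and stable; a CRH-repeller of $f$ is a CRH-attractor of $f^{-1}$. A CRH-attractor $A$ is a dissipative attractor if there exists a point $x\notin A$ such that for every $\varepsilon>0$ some $\varepsilon$-orbit connects $x$ to a point of $A$; otherwise $A$ is called a reversible core. A dissipative repeller is a dissipative attractor of $f^{-1}$. *)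

(* Defs.v *)
From HB Require Import structures.
From mathcomp Require Import all_boot all_order all_algebra.
From mathcomp Require Import all_classical all_reals all_analysis.
Set Implicit Arguments. Unset Strict Implicit. Unset Printing Implicit Defensive.
Import Order.TTheory GRing.Theory Num.Theory.
Local Open Scope classical_set_scope.
Local Open Scope ring_scope.

Section CRH.
Context {R : realType} {T : metricType R}.
Implicit Types (f : T -> T) (A : set T) (eps : R).

Definition separable_space : Prop :=
  exists D : set T, countable D /\ dense D.

Definition homeomorphism_with_inverse (f g : T -> T) : Prop :=
  continuous f /\ continuous g /\ cancel f g /\ cancel g f.

(* An eps-orbit x_0, ..., x_N (N+1 points, N >= 0), given as xs restricted
   to {0..N}: dist (f x_j) x_{j+1} < eps for j < N. *)
Definition eps_orbit f eps (xs : nat -> T) (N : nat) : Prop :=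
  forall j, (j < N)%N -> mdist (f (xs j)) (xs j.+1) < eps.

Definition connects (xs : nat -> T) (N : nat) (x y : T) : Prop :=
  xs 0%N = x /\ xs N = y.

Definition lies_in (xs : nat -> T) (N : nat) A : Prop :=
  forall j, (j <= N)%N -> A (xs j).

Definition invariant f A : Prop := f @` A = A.

Definition nbhd_of A (delta : R) : set T :=
  [set y | exists2 a, A a & mdist a y < delta].

Definition chain_transitive f A : Prop :=
  closed A /\ invariant f A /\
  forall eps, 0 < eps -> forall x y, A x -> A y ->
    exists xs N, eps_orbit f eps xs N /\ connects xs N x y /\ lies_in xs N A.

Definition stable f A : Prop :=
  closed A /\ invariant f A /\
  forall delta, 0 < delta -> exists2 eps, 0 < eps &
    forall xs N, eps_orbit f eps xs N -> A (xs 0%N) ->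
      forall j, (j <= N)%N -> nbhd_of A delta (xs j).

Definition CRH_attractor f A : Prop :=
  A !=set0 /\ chain_transitive f A /\ stable f A.

Definition CRH_repeller f finv A : Prop := CRH_attractor finv A.

Definition dissipative_attractor f A : Prop :=
  CRH_attractor f A /\
  exists x, ~ A x /\ forall eps, 0 < eps ->
    exists xs N y, eps_orbit f eps xs N /\ A y /\ connects xs N x y.

Definition reversible_core f A : Prop :=
  CRH_attractor f A /\ ~ dissipative_attractor f A.

Definition dissipative_repeller f finv A : Prop :=
  dissipative_attractor finv A.

End CRH.

(* Main.v *)
Require Import Defs.
From HB Require Import structures.
From mathcomp Require Import all_boot all_order all_algebra.
From mathcomp Require Import all_classical all_reals all_analysis.
From mathcomp Require Import lra zify.
Set Implicit Arguments. Unset Strict Implicit. Unset Printing Implicit Defensive.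
Import Order.TTheory GRing.Theory Num.Theory.
Local Open Scope classical_set_scope.
Local Open Scope ring_scope.

Section Basics.
Context {R : realType} {M : metricType R}.
Implicit Types (x y z : M) (P S : set M).

Lemma nbhs_distP x P : nbhs x P <-> exists2 r : R, 0 < r & forall y, mdist x y < r -> P y.
Proof.
rewrite -metricType_numDomainType.nbhs_nbhs_mdist; split.
  by move=> [r /= r0 H]; exists r => // y xy; apply: H.
by move=> [r r0 H]; exists r => //= y; apply: H.
Qed.

Lemma cont_dist (g : M -> M) x : continuous g -> forall e : R, 0 < e ->
  exists2 r : R, 0 < r & forall y, mdist x y < r -> mdist (g x) (g y) < e.
Proof.
move=> gc e e0.
have H := (metricType_numDomainType.cvgrPdist_lt g (g x)).1 (gc x) e e0.
have [r r0 Hr] := (nbhs_distP x (fun y => mdist (g x) (g y) < e)).1 (H _).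
by exists r.
Qed.

Lemma open_distP S : (forall u, S u -> exists2 r : R, 0 < r & forall w, mdist u w < r -> S w) -> open S.
Proof. by move=> H; rewrite openE => u /H /nbhs_distP. Qed.

Lemma closure_distP S v : closure S v -> forall e : R, 0 < e -> exists s, S s /\ mdist v s < e.
Proof.
move=> cl e e0; have [|s [Ss vs]] := cl [set y | mdist v y < e].
  by apply/nbhs_distP; exists e.
by exists s.
Qed.

Lemma closed_distP S : (forall v, (forall e : R, 0 < e -> exists s, S s /\ mdist v s < e) -> S v) -> closed S.
Proof.
move=> H v cl; apply: H => e e0; exact: closure_distP.
Qed.

Lemma closed_ball_out S z : closed S -> ~ S z -> exists2 r : R, 0 < r & forall c, S c -> r <= mdist c z.
Proof.
move=> cS nz.
have : ~ closure S z by move=> /cS.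
move=> ncl.
have : ~ (forall e : R, 0 < e -> exists s, S s /\ mdist z s < e).
  move=> H; apply: ncl => B /nbhs_distP [r r0 Br].
  by have [s [Ss zs]] := H r r0; exists s; split => //; apply: Br.
move=> /existsNP [e /not_implyP [e0 /forallNP He]].
exists e => // c Sc; rewrite leNgt; apply/negP => ce.
by apply: (He c); split => //; rewrite metric_sym.
Qed.

Lemma cluster_seq (u : nat -> M) : compact [set: M] ->
  exists z, forall e : R, 0 < e -> forall N, exists n, (N <= n)%N /\ mdist z (u n) < e.
Proof.
move=> cM.
have [z [_ cz]] := cM (u @ \oo) _ filterT.
exists z => e e0 N.
have F1 : (u @ \oo) (u @` [set n | (N <= n)%N]).
  by rewrite /= ; near=> n; exists n => //; near: n; exact: nbhs_infty_ge.
have F2 : nbhs z [set y | mdist z y < e] by apply/nbhs_distP; exists e.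
have [w [[n Nn <-] zw]] := cz _ _ F1 F2.
by exists n.
Unshelve. all: by end_near. Qed.

End Basics.

Section Chains.
Context {R : realType} {M : metricType R}.
Variable g : M -> M.
Implicit Types (x y z w : M) (xs ys : nat -> M) (e : R).

Lemma orbit_mono e e' xs N : e <= e' -> eps_orbit g e xs N -> eps_orbit g e' xs N.
Proof. by move=> ee H j jN; apply: lt_le_trans (H j jN) ee. Qed.

Lemma orbit_trunc e xs N K : (K <= N)%N -> eps_orbit g e xs N -> eps_orbit g e xs K.
Proof. by move=> KN H j jK; apply: H; apply: leq_trans jK KN. Qed.

Definition cat_ch xs ys N := fun j => if (j <= N)%N then xs j else ys (j - N)%N.

Lemma orbit_cat e xs ys N K : eps_orbit g e xs N -> eps_orbit g e ys K -> xs N = ys 0%N ->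
  [/\ eps_orbit g e (cat_ch xs ys N) (N + K), cat_ch xs ys N 0%N = xs 0%N &
      cat_ch xs ys N (N + K)%N = ys K].
Proof.
move=> Hx Hy E; split.
- move=> j jNK; rewrite /cat_ch.
  case: (ltnP j N) => jN.
    by rewrite (ltnW jN); apply: Hx.
  have -> : (j.+1 - N)%N = (j - N).+1 by rewrite subSn.
  case: (leqP j N) => jN'.
    have -> : j = N by apply/eqP; rewrite eqn_leq jN' jN.
    rewrite E subnn; apply: Hy; lia.
  apply: Hy; lia.
- by rewrite /cat_ch leq0n.
- rewrite /cat_ch; case: (leqP (N + K) N) => h.
    have K0 : K = 0%N by lia.
    by rewrite K0 addn0 E.
  by rewrite addKn.
Qed.

Definition repl_last xs N w := fun j => if j == N then w else xs j.

Lemma orbit_last e1 e2 xs N w : (0 < N)%N -> eps_orbit g e1 xs N -> mdist (xs N) w < e2 ->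
  [/\ eps_orbit g (e1 + e2) (repl_last xs N w) N, repl_last xs N w 0%N = xs 0%N &
      repl_last xs N w N = w].
Proof.
move=> N0 H d2; split.
- move=> j jN; rewrite /repl_last (ltn_eqF jN).
  case: eqP => [jN1|_].
    apply: le_lt_trans (metric_triangle _ (xs N) _) _.
    by rewrite ltrD // -jN1 H.
  by apply: lt_le_trans (H j jN) _; rewrite lerDl; apply: ltW; apply: le_lt_trans d2; apply: mdist_ge0.
- by rewrite /repl_last; case: eqP => // N0'; rewrite -N0' in N0.
- by rewrite /repl_last eqxx.
Qed.

Definition repl_first xs w := fun j => if j == 0%N then w else xs j.

Lemma orbit_first e xs N w : (0 < N)%N -> eps_orbit g e xs N -> mdist (g w) (xs 1%N) < e ->
  [/\ eps_orbit g e (repl_first xs w) N, repl_first xs w 0%N = w &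
      repl_first xs w N = xs N].
Proof.
move=> N0 H d1; split.
- move=> j jN; rewrite /repl_first /=.
  by case: eqP => [->|_] //; apply: H.
- by [].
- by rewrite /repl_first; case: eqP => // N0'; rewrite N0' in N0.
Qed.

Definition step_ch x y := fun j : nat => if j == 0%N then x else y.

Lemma orbit_step e x y : mdist (g x) y < e -> eps_orbit g e (step_ch x y) 1.
Proof. by move=> H j; rewrite ltnS leqn0 => /eqP ->. Qed.

Lemma orbit_nil e x : eps_orbit g e (fun _ => x) 0.
Proof. by []. Qed.

Definition Gam x := [set y | forall e, 0 < e -> exists xs N,
  [/\ (0 < N)%N, eps_orbit g e xs N, xs 0%N = x & xs N = y]].

Lemma Gam_g x : Gam x (g x).
Proof.
move=> e e0; exists (step_ch x (g x)), 1%N; split => //.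
by apply: orbit_step; rewrite mdistxx.
Qed.

Lemma Gam_trans x y z : Gam x y -> Gam y z -> Gam x z.
Proof.
move=> Hxy Hyz e e0.
have [xs [N [N0 Hx x0 xN]]] := Hxy e e0.
have [ys [K [K0 Hy y0 yK]]] := Hyz e e0.
have [H1 H2 H3] := orbit_cat Hx Hy (etrans xN (esym y0)).
exists (cat_ch xs ys N), (N + K)%N; split => //.
- by rewrite addn_gt0 N0.
- by rewrite H3.
Qed.

Lemma Gam_closed x : closed (Gam x).
Proof.
apply: closed_distP => v Hv e e0.
have e20 : 0 < e / 2 by lra.
have [s [Gs vs]] := Hv _ e20.
have [xs [N [N0 Hx x0 xN]]] := Gs _ e20.
have d2 : mdist (xs N) v < e / 2 by rewrite xN metric_sym.
have [H1 H2 H3] := orbit_last N0 Hx d2.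
exists (repl_last xs N v), N; split => //.
- by move: H1; have -> : e / 2 + e / 2 = e by lra.
- by rewrite H2.
Qed.

End Chains.

Section More.
Context {R : realType} {M : metricType R}.
Implicit Types (x y z w : M) (xs ys : nat -> M) (e : R).

Lemma natinv_small (e : R) : 0 < e -> exists N : nat, forall n, (N <= n)%N -> n.+1%:R^-1 < e.
Proof.
move=> e0.
have [N _ HN] := near_infty_natSinv_lt (PosNum e0).
by exists N => n Nn; apply: HN.
Qed.

Lemma unif_cont (h : M -> M) : compact [set: M] -> continuous h ->
  forall e : R, 0 < e -> exists2 r : R, 0 < r & forall x y, mdist x y < r -> mdist (h x) (h y) < e.
Proof.
move=> cM hc e e0.
apply: contrapT => Hn.
have Hn' : forall n : nat, exists p : M * M, mdist p.1 p.2 < n.+1%:R^-1 /\ e <= mdist (h p.1) (h p.2).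
  move=> n; apply: contrapT => Hp; apply: Hn; exists n.+1%:R^-1 => // x y xy.
  rewrite ltNge; apply/negP => ex; apply: Hp; exists (x, y); split => //.
have [u Hu] := choice Hn'.
have [z Hz] := cluster_seq (fst \o u) cM.
have e20 : 0 < e / 2 by lra.
have [eta eta0 Heta] := cont_dist z hc e20.
have eta20 : 0 < eta / 2 by lra.
have [N HN] := natinv_small eta20.
have [n [Nn zn]] := Hz _ eta20 N.
have [d1 d2] := Hu n.
have zy : mdist z (u n).2 < eta.
  apply: le_lt_trans (metric_triangle _ (u n).1 _) _.
  have := HN n Nn; simpl in zn => H; have := lt_trans d1 H; lra.
have h1 : mdist (h z) (h (u n).1) < e / 2 by apply: Heta; simpl in zn; lra.
have h2 := Heta _ zy.
have : mdist (h (u n).1) (h (u n).2) < e.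
  apply: le_lt_trans (metric_triangle _ (h z) _) _.
  rewrite metric_sym in h1; simpl in h1; lra.
by rewrite ltNge d2.
Qed.

End More.

Section ClassAttr.
Context {R : realType} {M : metricType R}.
Variables (g ginv : M -> M).
Hypothesis hg : homeomorphism_with_inverse g ginv.
Hypothesis cM : compact [set: M].
Variable A : set M.
Hypothesis A0 : A !=set0.
Hypothesis HA : forall a, A a -> Gam g a = A.

Lemma class_stable_part (delta : R) : 0 < delta -> exists2 eps : R, 0 < eps &
      forall xs N, eps_orbit g eps xs N -> A (xs 0%N) ->
      forall j, (j <= N)%N -> nbhd_of A delta (xs j).
Proof.
move=> d0; apply: contrapT => Hn.
have Hw : forall n : nat, exists w, ~ nbhd_of A delta w /\ exists xs K,
    [/\ eps_orbit g n.+1%:R^-1 xs K, A (xs 0%N) & xs K = w].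
  move=> n; apply: contrapT => Hp; apply: Hn; exists n.+1%:R^-1 => // xs N H Ax j jN.
  apply: contrapT => Hnb; apply: Hp; exists (xs j); split => //.
  by exists xs, j; split => //; apply: orbit_trunc H.
have [u Hu] := choice Hw.
have [z Hz] := cluster_seq u cM.
have [a Aa] := A0.
have Gz : Gam g a z.
  move=> e e0; have e20 : 0 < e / 2 by lra.
  have [N HN] := natinv_small e20.
  have [n [Nn zn]] := Hz _ e20 N.
  have [_ [ys [K [Hy Ay yK]]]] := Hu n.
  have Gy : Gam g a (ys 0%N) by rewrite HA.
  have [xs [L [L0 Hx x0 xL]]] := Gy _ e20.
  have Hy' : eps_orbit g (e / 2) ys K by apply: orbit_mono Hy; apply: ltW; exact: HN.
  have [H1 H2 H3] := orbit_cat Hx Hy' xL.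
  have dl : mdist (cat_ch xs ys L (L + K)) z < e / 2 by rewrite H3 yK metric_sym.
  have LK0 : (0 < L + K)%N by rewrite addn_gt0 L0.
  have [H4 H5 H6] := orbit_last LK0 H1 dl.
  exists (repl_last (cat_ch xs ys L) (L + K) z), (L + K)%N; split => //.
  - by move: H4; have -> : e / 2 + e / 2 = e by lra.
  - by rewrite H5 H2.
have Az : A z by rewrite -(HA Aa).
have [n [_ zn]] := Hz _ d0 0%N.
by have [+ _] := Hu n; apply; exists z.
Qed.

Lemma class_closed : closed A.
Proof. by have [a Aa] := A0; rewrite -(HA Aa); apply: Gam_closed. Qed.

Lemma class_invariant : g @` A = A.
Proof.
have [gc [gic [c1 c2]]] := hg.
apply/seteqP; split.
  by move=> _ [a Aa <-]; rewrite -(HA Aa); apply: Gam_g.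
move=> a Aa; exists (ginv a); last by rewrite c2.
rewrite -(HA Aa) => e e0.
have e20 : 0 < e / 2 by lra.
have [eta eta0 Heta] := unif_cont cM gic e20.
pose e' := Num.min eta (e / 2).
have e'0 : 0 < e' by rewrite lt_min eta0 e20.
have Gaa : Gam g a a by rewrite HA.
have [xs [N [N0 Hx x0 xN]]] := Gaa _ e'0.
have [H1 H2 H3] := orbit_cat Hx Hx (etrans xN (esym x0)).
set zs := cat_ch xs xs N in H1 H2 H3.
have L1 : (0 < (N + N).-1)%N by lia.
have Ht : eps_orbit g e' zs (N + N).-1 by apply: orbit_trunc H1; lia.
have st : mdist (g (zs (N + N).-1)) (zs (N + N)) < e'.
  by have := H1 (N + N).-1; rewrite prednK ?addn_gt0 ?N0 //; apply; lia.
have dl : mdist (zs (N + N).-1) (ginv a) < e / 2.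
  rewrite -{1}(c1 (zs (N + N).-1)); apply: Heta.
  rewrite -xN -H3; apply: lt_le_trans st _; by rewrite ge_min lexx.
have [H4 H5 H6] := orbit_last L1 Ht dl.
exists (repl_last zs (N + N).-1 (ginv a)), (N + N).-1; split => //.
- apply: orbit_mono H4; have : e' <= e / 2 by rewrite ge_min lexx orbT.
  lra.
- by rewrite H5 H2.
Qed.

Lemma class_ct : forall eps : R, 0 < eps -> forall x y, A x -> A y ->
    exists xs N, eps_orbit g eps xs N /\ connects xs N x y /\ lies_in xs N A.
Proof.
have [gc [gic [c1 c2]]] := hg.
move=> e e0 x y Ax Ay.
have e30 : 0 < e / 3 by lra.
have [eta eta0 Heta] := unif_cont cM gc e30.
pose eta' := Num.min eta (e / 3).
have eta'0 : 0 < eta' by rewrite lt_min eta0 e30.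
have [e1 e10 He1] := class_stable_part eta'0.
pose e2 := Num.min e1 (e / 3).
have e20 : 0 < e2 by rewrite lt_min e10 e30.
have Gxy : Gam g x y by rewrite HA.
have [xs [N [N0 Hx x0 xN]]] := Gxy _ e20.
have Hp : forall w, exists a, (A w -> a = w) /\ (nbhd_of A eta' w -> A a /\ mdist a w < eta').
  move=> w; case: (pselect (A w)) => Aw.
    by exists w; split => // _; split => //; rewrite mdistxx.
  case: (pselect (nbhd_of A eta' w)) => [[a Aa aw]|nw].
    by exists a; split.
  by exists w; split.
have [p Hpp] := choice Hp.
have Hnb : forall j, (j <= N)%N -> nbhd_of A eta' (xs j).
  apply: He1; last by rewrite x0.
  by apply: orbit_mono Hx; rewrite ge_min lexx.
have eta'e : eta' <= eta by rewrite ge_min lexx.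
have eta'e3 : eta' <= e / 3 by rewrite ge_min lexx orbT.
have e2e3 : e2 <= e / 3 by rewrite ge_min lexx orbT.
exists (p \o xs), N; split; [|split].
- move=> j jN.
  have [A1 d1] := (Hpp (xs j)).2 (Hnb j (ltnW jN)).
  have [A2 d2] := (Hpp (xs j.+1)).2 (Hnb j.+1 jN).
  have s1 : mdist (g (p (xs j))) (g (xs j)) < e / 3 by apply: Heta; lra.
  have s2 := Hx j jN.
  rewrite /=.
  apply: le_lt_trans (metric_triangle _ (g (xs j)) _) _.
  apply: le_lt_trans (lerD (lexx _) (metric_triangle _ (xs j.+1) _)) _.
  rewrite (metric_sym (xs j.+1)).
  lra.
- by split; rewrite /= ?x0 ?xN; apply: (Hpp _).1.
- by move=> j jN; exact: ((Hpp (xs j)).2 (Hnb j jN)).1.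
Qed.

Lemma class_CRH : CRH_attractor g A.
Proof.
split => //; split; first split.
- exact: class_closed.
- split; [exact: class_invariant|exact: class_ct].
- split; first exact: class_closed.
  split; [exact: class_invariant|exact: class_stable_part].
Qed.

End ClassAttr.

Section MinClass.
Context {R : realType} {M : metricType R}.
Variable g : M -> M.
Hypothesis cM : compact [set: M].

Definition PC (v : M) (S : set M) : Prop :=
  [/\ S `<=` Gam g v, S !=set0, closed S & forall x, S x -> Gam g x `<=` S].

Lemma min_class (v : M) : exists A : set M,
  [/\ A `<=` Gam g v, A !=set0 & forall a, A a -> Gam g a = A].
Proof.
pose T := {S : set M | PC v S}.
have P0 : PC v (Gam g v).
  split => //; [by exists (g v); apply: Gam_g|exact: Gam_closed|].
  by move=> x Gx y Gy; apply: Gam_trans Gx Gy.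
pose t0 : T := exist _ _ P0.
pose Rl : rel T := fun s t => `[< sval t `<=` sval s >].
have [| | |t tmax] := @ZL_preorder T t0 Rl.
- by move=> s; apply/asboolP.
- move=> r s t /asboolP rs /asboolP st; apply/asboolP; exact: subset_trans st rs.
- move=> A0 Atot.
  case: (pselect (exists s, A0 s)) => [[s0 As0]|nA]; last first.
    by exists t0 => s As; exfalso; apply: nA; exists s.
  pose I := \bigcap_(s in A0) sval s.
  have hfil : Filter (filter_from A0 (fun s : T => sval s)).
    apply: filter_from_filter; first by exists s0.
    move=> i j Ai Aj; case: (Atot i j Ai Aj) => /asboolP H.
      by exists j => // x jx; split => //; apply: H.
    by exists i => // x ix; split => //; apply: H.
  have hpf : ProperFilter (filter_from A0 (fun s : T => sval s)).
    apply: filter_from_proper => i _; by case: (svalP i).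
  have [p [_ cp]] := cM hpf (filterT).
  have PI : PC v I.
    split.
    - move=> x Ix; by case: (svalP s0) => + _ _ _; apply; apply: Ix.
    - exists p => s As; case: (svalP s) => _ _ cs _; apply: cs => B Bp.
      by apply: cp => //; exists s.
    - by apply: closed_bigI => s _; case: (svalP s).
    - move=> x Ix y Gy s As; case: (svalP s) => _ _ _ fs.
      by apply: (fs x) => //; apply: Ix.
  exists (exist _ _ PI) => s As; apply/asboolP => x Ix; exact: Ix.
- exists (sval t); case: (svalP t) => tv tn tc tf; split => // a Aa.
  have Pa : PC v (Gam g a).
    split => //.
    - by move=> y Gy; apply: tv; apply: tf Gy.
    - by exists (g a); apply: Gam_g.
    - exact: Gam_closed.
    - by move=> x Gx y Gy; apply: Gam_trans Gx Gy.
  have := tmax (exist _ _ Pa).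
  have Rts : Rl t (exist _ _ Pa) by apply/asboolP => /= y; apply: tf.
  move=> /(_ Rts) /asboolP /= H.
  apply/seteqP; split => //; exact: tf.
Qed.

End MinClass.

Lemma orbit_last' {R : realType} {M : metricType R} (g : M -> M) e xs N w :
  (0 < N)%N -> eps_orbit g e xs N -> mdist (g (xs N.-1)) w < e ->
  eps_orbit g e (repl_last xs N w) N.
Proof.
move=> N0 H dw j jN; rewrite /repl_last (ltn_eqF jN).
case: eqP => [jN1|_]; last exact: H.
by have -> : j = N.-1 by rewrite -jN1.
Qed.

Section Key.
Context {R : realType} {M : metricType R}.
Variables (g ginv : M -> M).
Hypothesis hg : homeomorphism_with_inverse g ginv.
Hypothesis cM : compact [set: M].
Hypothesis hconn : connected [set: M].
Variable C : set M.
Hypothesis hCc : closed C.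
Hypothesis hCi : g @` C = C.
Hypothesis hCn : C !=set0.
Hypothesis hCs : stable g C.
Hypothesis hnd : ~ (exists x, ~ C x /\ forall eps : R, 0 < eps ->
    exists xs N y, eps_orbit g eps xs N /\ C y /\ connects xs N x y).
Variable z : M.
Hypothesis hz : ~ C z.

Lemma key (delta : R) : 0 < delta -> exists A : set M,
  [/\ dissipative_attractor g A, A `<=` nbhd_of C delta & forall a, A a -> ~ C a].
Proof.
move=> d0.
have [gc [gic [c1 c2]]] := hg.
have [r0 r00 Hr0] := closed_ball_out hCc hz.
pose r := Num.min delta r0.
have r_pos : 0 < r by rewrite lt_min d0 r00.
have [_ [_ Hst]] := hCs.
have [e0 e00 He0] := Hst r r_pos.
pose e := e0 / 2.
have e_pos : 0 < e by rewrite /e; lra.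
pose S := [set u | exists xs N, [/\ eps_orbit g e xs N, C (xs 0%N) & xs N = u]].
have hSn : S `<=` nbhd_of C r.
  move=> u [xs [N [H C0 <-]]]; apply: (He0 xs N) => //.
  by apply: orbit_mono H; rewrite /e; lra.
have CS : C `<=` S by move=> c Cc; exists (fun _ => c), 0%N; split.
have Sopen : open S.
  apply: open_distP => u [xs [N [H C0 xN]]].
  case: (posnP N) => [N0|N0].
    have Cu : C u by rewrite -xN N0.
    have : (g @` C) u by rewrite hCi.
    move=> [c' Cc' gc'].
    exists e => // w uw; exists (step_ch c' w), 1%N; split => //.
    by apply: orbit_step; rewrite gc'.
  have m0 : 0 < e - mdist (g (xs N.-1)) u.
    by rewrite subr_gt0 -xN -{2}(prednK N0); apply: H; rewrite prednK.
  exists (e - mdist (g (xs N.-1)) u) => // w uw.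
  exists (repl_last xs N w), N; split.
  - apply: orbit_last' => //.
    apply: le_lt_trans (metric_triangle _ u _) _; lra.
  - by rewrite /repl_last; case: eqP => // N0'; rewrite -N0' in N0.
  - by rewrite /repl_last eqxx.
have nSc : ~ closed S.
  move=> Sc.
  have SA : S = [set: M].
    apply: hconn.
    - by have [c Cc] := hCn; exists c; apply: CS.
    - by exists S => //; rewrite setTI.
    - by exists S => //; rewrite setTI.
  have [c Cc cz] : nbhd_of C r z by apply: hSn; rewrite SA.
  have := Hr0 c Cc; have : r <= r0 by rewrite ge_min lexx orbT.
  move: cz; lra.
have [v [clv nSv]] : exists v, closure S v /\ ~ S v.
  apply: contrapT => Hn; apply: nSc => v clv; apply: contrapT => nSv.
  by apply: Hn; exists v.
have glue : forall ys K, (0 < K)%N -> eps_orbit g e ys K -> ys 0%N = v -> S (ys K).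
  move=> ys K K0 Hy y0.
  have st := Hy 0%N K0; rewrite y0 in st.
  have m0 : 0 < e - mdist (g v) (ys 1%N) by rewrite subr_gt0.
  have [eta eta0 Heta] := cont_dist v gc m0.
  have [s [[xs [N [Hx C0 xN]]] vs]] := closure_distP clv eta0.
  have ds := Heta _ vs.
  have st' : mdist (g s) (ys 1%N) < e.
    apply: le_lt_trans (metric_triangle _ (g v) _) _; rewrite metric_sym in ds; lra.
  have [H1 H2 H3] := orbit_first K0 Hy st'.
  have [H4 H5 H6] := orbit_cat Hx H1 (etrans xN (esym H2)).
  by exists (cat_ch xs (repl_first ys s) N), (N + K)%N; split => //; rewrite ?H5 ?H6.
have GS : Gam g v `<=` S.
  move=> y Gy; have [ys [K [K0 Hy y0 yK]]] := Gy e e_pos.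
  by rewrite -yK; apply: glue.
have nGv : ~ Gam g v v by move=> /GS.
have GC : forall c, Gam g v c -> ~ C c.
  move=> c Gc Cc; apply: hnd; exists v; split; first by move=> /CS.
  move=> eps eps0; have [xs [N [_ H x0 xN]]] := Gc eps eps0.
  by exists xs, N, c.
have [A [Av An HA]] := min_class g cM v.
exists A; split.
- split; first exact: (class_CRH hg cM An HA).
  exists v; split; first by move=> /Av.
  move=> eps eps0; have [a Aa] := An.
  have [xs [N [_ H x0 xN]]] := Av a Aa eps eps0.
  by exists xs, N, a.
- move=> a Aa; have [c Cc ca] := hSn a (GS a (Av a Aa)).
  by exists c => //; apply: lt_le_trans ca _; rewrite ge_min lexx.
- by move=> a Aa; apply: GC; apply: Av.
Qed.

End Key.

Section Reverse.
Context {R : realType} {M : metricType R}.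
Variables (f finv : M -> M).
Hypothesis hf : homeomorphism_with_inverse f finv.
Hypothesis cM : compact [set: M].

Lemma rev_orbit : forall e : R, 0 < e -> exists2 e' : R, 0 < e' &
  forall xs N, eps_orbit finv e' xs N -> eps_orbit f e (fun j => xs (N - j)%N) N.
Proof.
have [fc [fic [c1 c2]]] := hf.
move=> e e0; have [e' e'0 He'] := unif_cont cM fc e0.
exists e' => // xs N H j jN.
have -> : (N - j)%N = (N - j.+1).+1 by lia.
have := He' _ _ (H (N - j.+1)%N ltac:(lia)).
by rewrite c2 metric_sym.
Qed.

Variable C : set M.
Hypothesis hCi : f @` C = C.
Hypothesis hCs : stable f C.
Hypothesis hnd : ~ (exists x, ~ C x /\ forall eps : R, 0 < eps ->
    exists xs N y, eps_orbit f eps xs N /\ C y /\ connects xs N x y).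

Lemma inv_invariant : finv @` C = C.
Proof.
have [fc [fic [c1 c2]]] := hf.
apply/seteqP; split.
  move=> _ [c Cc <-].
  have : (f @` C) c by rewrite hCi.
  by move=> [c' Cc' <-]; rewrite c1.
move=> c Cc; exists (f c); last by rewrite c1.
by rewrite -hCi; exists c.
Qed.

Lemma inv_nondiss : ~ (exists x, ~ C x /\ forall eps : R, 0 < eps ->
    exists xs N y, eps_orbit finv eps xs N /\ C y /\ connects xs N x y).
Proof.
move=> [x [nCx Hx]].
have [hCc [_ Hst]] := hCs.
have [r r0 Hr] := closed_ball_out hCc nCx.
have [e0 e00 He0] := Hst r r0.
have [e' e'0 He'] := rev_orbit e00.
have [xs [N [y [H [Cy [x0 xN]]]]]] := Hx e' e'0.
have := He0 _ N (He' _ _ H) => /=.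
rewrite subn0 xN => /(_ Cy N (leqnn N)); rewrite subnn x0.
move=> [c Cc cx]; have := Hr c Cc; rewrite leNgt cx //.
Qed.

Lemma inv_stable : stable finv C.
Proof.
have [fc [fic [c1 c2]]] := hf.
have [hCc _] := hCs.
split => //; split; first exact: inv_invariant.
move=> delta d0; apply: contrapT => Hn.
have Hw : forall n : nat, exists w, ~ nbhd_of C delta w /\ exists ys K,
    [/\ eps_orbit f n.+1%:R^-1 ys K, ys 0%N = w & C (ys K)].
  move=> n; have [e' e'0 He'] := rev_orbit (ltac:(by []) : 0 < n.+1%:R^-1 :> R).
  apply: contrapT => Hp; apply: Hn; exists e' => // xs N H Cx j jN.
  apply: contrapT => Hnb; apply: Hp; exists (xs j); split => //.
  exists (fun i => xs (j - i)%N), j; split.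
  - by apply: He'; apply: orbit_trunc H.
  - by rewrite subn0.
  - by rewrite subnn.
have [u Hu] := choice Hw.
have [z Hz] := cluster_seq u cM.
apply: hnd; exists z; split.
  move=> Cz; have [n [_ zn]] := Hz _ d0 0%N.
  by have [+ _] := Hu n; apply; exists z.
move=> eps eps0.
have e20 : 0 < eps / 2 by lra.
have [eta eta0 Heta] := cont_dist z fc e20.
have [N HN] := natinv_small e20.
have [n [Nn zn]] := Hz _ eta0 N.
have [nn [ys [K [Hy y0 yK]]]] := Hu n.
have K0 : (0 < K)%N.
  case: (posnP K) => // K0; exfalso; apply: nn; exists (u n); last by rewrite mdistxx.
  by rewrite -y0 -K0.
have hn := HN n Nn.
have Hy' : eps_orbit f eps ys K by apply: orbit_mono Hy; apply: ltW; apply: lt_trans hn _; lra.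
have st : mdist (f z) (ys 1%N) < eps.
  apply: le_lt_trans (metric_triangle _ (f (u n)) _) _.
  have := Heta _ zn; have := Hy 0%N K0; rewrite y0 => h1 h2.
  have h3 := lt_trans h1 hn; lra.
have [H1 H2 H3] := orbit_first K0 Hy' st.
by exists (repl_first ys z), K, (ys K); split => //; split => //; rewrite H3.
Qed.

End Reverse.

Lemma nbhd_mono {R : realType} {M : metricType R} (C : set M) (d1 d2 : R) :
  d1 <= d2 -> nbhd_of C d1 `<=` nbhd_of C d2.
Proof. by move=> d12 y [a Ca ay]; exists a => //; apply: lt_le_trans ay d12. Qed.

Lemma seq_inj {R : realType} {M : metricType R} (C : set M) (dl : nat -> R) (X : R -> set M)
  (rad : set M -> R) :
  (forall k m, (k <= m)%N -> dl m <= dl k) ->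
  (forall k, X (dl k) `<=` nbhd_of C (dl k)) ->
  (forall k, ~ (X (dl k) `<=` nbhd_of C (rad (X (dl k))))) ->
  (forall k, dl k.+1 <= rad (X (dl k))) ->
  injective (fun k => X (dl k)).
Proof.
move=> dmono hsub hrad hstep.
have H : forall i j, (i < j)%N -> X (dl i) <> X (dl j).
  move=> i j ij E; apply: (hrad i); rewrite {1}E.
  apply: subset_trans (hsub j) _; apply: nbhd_mono.
  apply: (le_trans _ (hstep i)); exact: dmono.
move=> i j /= E; case: (ltngtP i j) => // ij.
  by exfalso; apply: H ij E.
by exfalso; apply: H ij (esym E).
Qed.

Unset Implicit Arguments.

Theorem theorem1 (R : realType) (M : metricType R) (f finv : M -> M)
  (hM_compact : compact [set: M]) (hM_connected : connected [set: M])
  (hM_separable : @separable_space R M)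
  (hf : homeomorphism_with_inverse f finv)
  (hM_not_ct : ~ chain_transitive f [set: M])
  (C : set M) (hC : reversible_core f C) :
  exists (A Rp : nat -> set M) (delta : nat -> R),
    (forall k, dissipative_attractor f (A k)) /\ injective A /\
    (forall k, dissipative_repeller f finv (Rp k)) /\ injective Rp /\
    delta @ \oo --> 0 /\
    (forall k, A k `<=` nbhd_of C (delta k) /\ Rp k `<=` nbhd_of C (delta k)).
Proof.
have [[Cn [Cct Cst]] Cnd] := hC.
have hnd : ~ (exists x, ~ C x /\ forall eps : R, 0 < eps ->
    exists xs N y, eps_orbit f eps xs N /\ C y /\ connects xs N x y).
  by move=> H; apply: Cnd; split.
have [z nCz] : exists z, ~ C z.
  apply: contrapT => H; apply: hM_not_ct.
  have -> : [set: M] = C.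
    by apply/seteqP; split => // x _; apply: contrapT => nx; apply: H; exists x.
  exact: Cct.
have [hCc [hCi _]] := Cst.
have hf' : homeomorphism_with_inverse finv f.
  by case: hf => [a [b [c d]]]; split => //; split => //; split.
have keyf := key hf hM_compact hM_connected hCc hCi Cn Cst hnd nCz.
have keyi := key hf' hM_compact hM_connected hCc (inv_invariant hf hCi) Cn
  (inv_stable hf hM_compact hCi Cst hnd) (inv_nondiss hf hM_compact Cst) nCz.
have HAf0 : forall d : R, exists A : set M, 0 < d ->
  [/\ dissipative_attractor f A, A `<=` nbhd_of C d & forall a, A a -> ~ C a].
  move=> d; case: (pselect (0 < d)) => [d0|nd].
    by have [A HA] := keyf d d0; exists A.
  by exists set0.
have [Af HAf] := choice HAf0.
have HRf0 : forall d : R, exists A : set M, 0 < d ->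
  [/\ dissipative_attractor finv A, A `<=` nbhd_of C d & forall a, A a -> ~ C a].
  move=> d; case: (pselect (0 < d)) => [d0|nd].
    by have [A HA] := keyi d d0; exists A.
  by exists set0.
have [Rf HRf] := choice HRf0.
have Hrad : forall A : set M, exists r : R, A !=set0 -> (forall a, A a -> ~ C a) ->
    0 < r /\ ~ (A `<=` nbhd_of C r).
  move=> A; case: (pselect (A !=set0 /\ forall a, A a -> ~ C a)) => [[[a Aa] Hd]|nh].
    have [r r0 Hr] := closed_ball_out hCc (Hd a Aa).
    exists r => _ _; split => // Hs; have [c Cc ca] := Hs a Aa.
    by have := Hr c Cc; rewrite leNgt ca.
  by exists 0 => h1 h2; exfalso; apply: nh; split.
have [rad Hr] := choice Hrad.
pose dl := fix dl (k : nat) : R := if k is k'.+1 then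
  Num.min (k'.+2%:R^-1) (Num.min (dl k') (Num.min (rad (Af (dl k'))) (rad (Rf (dl k')))))
  else 1.
have dlS : forall k, dl k.+1 =
  Num.min (k.+2%:R^-1) (Num.min (dl k) (Num.min (rad (Af (dl k))) (rad (Rf (dl k))))) by [].
have dpos : forall k, 0 < dl k.
  elim => [|k IH]; first by rewrite /= ltr01.
  have [[[An _] _] _ Ad] := HAf _ IH.
  have [[[Rn _] _] _ Rd] := HRf _ IH.
  have [r1 _] := Hr _ An Ad.
  have [r2 _] := Hr _ Rn Rd.
  by rewrite dlS !lt_min invr_gt0 ltr0n IH r1 r2.
have dle : forall k, dl k <= k.+1%:R^-1.
  by case => [|k]; [rewrite /= invr1|rewrite dlS ge_min lexx].
have dmono : forall k m, (k <= m)%N -> dl m <= dl k.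
  move=> k m; elim: m => [|m IH]; first by rewrite leqn0 => /eqP ->.
  rewrite leq_eqVlt => /orP [/eqP ->//|km].
  apply: le_trans (IH km); rewrite dlS ge_min; apply/orP; right.
  by rewrite ge_min lexx.
exists (fun k => Af (dl k)), (fun k => Rf (dl k)), dl.
split; [|split; [|split; [|split; [|split]]]].
- by move=> k; have [] := HAf _ (dpos k).
- apply: (seq_inj (C := C) (rad := rad)) => //.
  + by move=> k; have [] := HAf _ (dpos k).
  + move=> k; have [[[An _] _] _ Ad] := HAf _ (dpos k).
    by have [] := Hr _ An Ad.
  + move=> k; rewrite dlS ge_min; apply/orP; right.
    rewrite ge_min; apply/orP; right; by rewrite ge_min lexx.
- by move=> k; have [] := HRf _ (dpos k).
- apply: (seq_inj (C := C) (rad := rad)) => //.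
  + by move=> k; have [] := HRf _ (dpos k).
  + move=> k; have [[[An _] _] _ Ad] := HRf _ (dpos k).
    by have [] := Hr _ An Ad.
  + move=> k; rewrite dlS ge_min; apply/orP; right.
    rewrite ge_min; apply/orP; right; by rewrite ge_min lexx orbT.
- apply/cvgrPdist_lt => eps eps0.
  have [N HN] := natinv_small eps0.
  exists N => // t /= Nt.
  rewrite sub0r normrN gtr0_norm ?dpos //.
  exact: le_lt_trans (dle t) (HN t Nt).
- move=> k; split.
  + by have [] := HAf _ (dpos k).
  + by have [] := HRf _ (dpos k).
Qed.
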